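(* Let $R=\bigoplus_{\alpha\in\Gamma}R_{\alpha}$ be a graded integral domain. Then $R$ is a graded-Prüfer domain if and only if $A_fA_g=A_{fg}$ for all $f,g\in R[X]$.
   Context: $\Gamma$ is a commutative cancellative monoid (written additively) whose quotient group $\langle\Gamma\rangle$ is torsion-free. A graded integral domain $R=\bigoplus_{\alpha\in\Gamma}R_\alpha$ is an integral domain that is the direct sum of additive subgroups $R_\alpha$ with $R_\alpha R_\beta\subseteq R_{\alpha+\beta}$. For $a\in R$, $C(a)$ is the ideal of $R$ generated by the homogeneous components of $a$; for $f=f_0+\cdots+f_nX^n\in R[X]$, $A_f:=\sum_i C(f_i)$. $R$ is a graded-Prüfer domain if every nonzero finitely generated homogeneous ideal of $R$ (i.e. ideal $I$ with $I=\bigoplus_\alpha(I\cap R_\alpha)$) is invertible. *)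

(* Defs.v *)
From HB Require Import structures.
From mathcomp Require Import all_boot all_order all_algebra fraction.
Set Implicit Arguments. Unset Strict Implicit. Unset Printing Implicit Defensive.
Import Order.TTheory GRing.Theory Num.Theory.
Local Open Scope ring_scope.

(* For a cancellative
   monoid, <Gamma> is torsion-free iff  n.+1 *a = n.+1 * b  implies a = b. *)
Definition cancellative (G : nmodType) : Prop :=
  forall a b c : G, a + b = a + c -> b = c.

Definition quotient_torsion_free (G : nmodType) : Prop :=
  forall (n : nat) (a b : G), a *+ n.+1 = b *+ n.+1 -> a = b.

Definition span (R : comRingType) (S : R -> Prop) : R -> Prop :=
  fun r => exists s : seq (R * R),
    (forall p, p \in s -> S p.2) /\ r = \sum_(p <- s) p.1 * p.2.

Definition is_ideal (R : comRingType) (I : R -> Prop) : Prop :=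
  [/\ I 0, (forall x y, I x -> I y -> I (x + y)) & (forall r x, I x -> I (r * x))].

Definition zero_ideal (R : comRingType) : R -> Prop := fun r => r = 0.

Definition ideal_sum (R : comRingType) (I J : R -> Prop) : R -> Prop :=
  span (fun x => I x \/ J x).

Definition ideal_prod (R : comRingType) (I J : R -> Prop) : R -> Prop :=
  span (fun z => exists x y, [/\ I x, J y & z = x * y]).

Definition ideal_eq (R : comRingType) (I J : R -> Prop) : Prop :=
  forall r, I r <-> J r.

(* A grading of R by Gamma: additive subgroups R_alpha with
   R_alpha R_beta <= R_(alpha+beta) and R = (+)_alpha R_alpha
   (every element is a finite sum of homogeneous elements of distinct
   degrees, and such sums are independent). *)
Record grading (G : nmodType) (R : idomainType) := Grading {
  hom : G -> R -> Prop;
  hom0 : forall a, hom a 0;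
  homD : forall a x y, hom a x -> hom a y -> hom a (x + y);
  homN : forall a x, hom a x -> hom a (- x);
  homM : forall a b x y, hom a x -> hom b y -> hom (a + b) (x * y);
  hom_gen : forall r : R, exists s : seq (G * R),
      [/\ uniq (map fst s), (forall p, p \in s -> hom p.1 p.2)
        & r = \sum_(p <- s) p.2];
  hom_indep : forall s : seq (G * R),
      uniq (map fst s) -> (forall p, p \in s -> hom p.1 p.2) ->
      \sum_(p <- s) p.2 = 0 -> forall p, p \in s -> p.2 = 0
}.

Section Graded.
Variables (G : nmodType) (R : idomainType) (gr : grading G R).

Definition hom_decomp (a : R) (s : seq (G * R)) : Prop :=
  [/\ uniq (map fst s), (forall p, p \in s -> hom gr p.1 p.2 /\ p.2 != 0)
    & a = \sum_(p <- s) p.2].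

Definition is_component (a x : R) : Prop :=
  exists s, hom_decomp a s /\ x \in map snd s.

Definition Cont (a : R) : R -> Prop := span (is_component a).

Definition Af (f : {poly R}) : R -> Prop :=
  foldr (@ideal_sum R) (@zero_ideal R) [seq Cont f`_i | i <- iota 0 (size f)].

(* homogeneous ideal: I = (+)_alpha (I cap R_alpha) *)
Definition homogeneous_ideal (I : R -> Prop) : Prop :=
  is_ideal I /\ forall a x, I a -> is_component a x -> I x.

Definition fin_gen (I : R -> Prop) : Prop :=
  exists s : seq R, ideal_eq I (span (fun x => x \in s)).

(* Invertible ideal: there is a fractional ideal J (an R-submodule of the
   fraction field) with I J = R. *)
Definition invertible_ideal (I : R -> Prop) : Prop :=
  exists J : {fraction R} -> Prop,
    [/\ J 0, (forall x y, J x -> J y -> J (x + y)),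
        (forall r x, J x -> J (FracField.tofrac r * x)),
        (exists d : R, d != 0 /\ forall x, J x -> exists r, FracField.tofrac d * x = FracField.tofrac r)
      & forall k : {fraction R},
          (exists s : seq (R * {fraction R}),
              (forall p, p \in s -> I p.1 /\ J p.2) /\
              k = \sum_(p <- s) FracField.tofrac p.1 * p.2)
          <-> (exists r : R, k = FracField.tofrac r)].

Definition graded_Prufer : Prop :=
  forall I : R -> Prop, homogeneous_ideal I -> fin_gen I ->
    (exists x, I x /\ x != 0) -> invertible_ideal I.

End Graded.

(* Main.v *)
Require Import Defs.
From HB Require Import structures.
From mathcomp Require Import all_boot all_order all_algebra fraction.
From mathcomp Require Import ring zify.
From Stdlib Require Import Classical ClassicalEpsilon.
Set Implicit Arguments. Unset Strict Implicit. Unset Printing Implicit Defensive.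
Import Order.TTheory GRing.Theory Num.Theory.
Local Open Scope ring_scope.
Lemma sum_partition (T : eqType) (V : nmodType) (I : eqType) (D : seq T)
   (s : seq I) (k : I -> T) (F : I -> V) :
  uniq D -> (forall p, p \in s -> k p \in D) ->
  \sum_(d <- D) \sum_(p <- s | k p == d) F p = \sum_(p <- s) F p.
Proof.
move=> uD hs.
rewrite (eq_bigr (fun d => \sum_(p <- s) (if k p == d then F p else 0)));
  last by move=> d _; rewrite big_mkcond.
rewrite exchange_big /= big_seq [RHS]big_seq; apply: eq_bigr => p ps.
rewrite (bigD1_seq (k p)) ?hs //= eqxx big1 ?addr0 // => d.
by rewrite eq_sym => /negbTE ->.
Qed.

Lemma sum_pred1_uniq (T : eqType) (V : nmodType) (D : seq T) (x : T) (F : T -> V) :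
  uniq D -> \sum_(d <- D | d == x) F d = if x \in D then F x else 0.
Proof.
move=> uD; case: ifP => xD.
  by rewrite -big_filter (filter_pred1_uniq uD xD) big_seq1.
rewrite big_seq_cond big1 // => d /andP [dD /eqP dx]; by rewrite dx xD in dD.
Qed.

Section Basics.
Variables (G : nmodType) (R : idomainType) (gr : grading G R).

Local Notation hom := (Defs.hom gr).

Lemma hom_sum (a : G) (I : Type) (r : seq I) (P : pred I) (F : I -> R) :
  (forall i, P i -> hom a (F i)) -> hom a (\sum_(i <- r | P i) F i).
Proof.
move=> h; apply: (big_ind (hom a)) => //; [exact: Defs.hom0 | exact: Defs.homD].
Qed.

Lemma homB a x y : hom a x -> hom a y -> hom a (x - y).
Proof. by move=> hx hy; apply: Defs.homD => //; apply: Defs.homN. Qed.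

Lemma hom_filt (s : seq (G * R)) g : (forall p, p \in s -> hom p.1 p.2) ->
  hom g (\sum_(p <- s | p.1 == g) p.2).
Proof.
move=> hs; rewrite big_seq_cond; apply: hom_sum => p /andP [ps /eqP <-].
exact: hs.
Qed.

Lemma K0 (s : seq (G * R)) : (forall p, p \in s -> hom p.1 p.2) ->
  \sum_(p <- s) p.2 = 0 -> forall g, \sum_(p <- s | p.1 == g) p.2 = 0.
Proof.
move=> hs s0 g.
pose D := undup (map fst s).
pose s' := [seq (d, \sum_(p <- s | p.1 == d) p.2) | d <- D].
have ms' : map fst s' = D.
  by rewrite /s' -map_comp (@eq_map _ _ _ id) // map_id.
have hs' : forall p, p \in s' -> hom p.1 p.2.
  by move=> p /mapP [d _ ->] /=; apply: hom_filt.
have sum' : \sum_(p <- s') p.2 = 0.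
  rewrite big_map /= sum_partition ?undup_uniq // => p ps.
  by rewrite mem_undup; apply: map_f.
have uD : uniq (map fst s') by rewrite ms' undup_uniq.
have := hom_indep uD hs' sum'.
case gD : (g \in D) => [|] H.
  by have := H (g, \sum_(p <- s | p.1 == g) p.2) (map_f _ gD).
rewrite big_seq_cond big1 // => p /andP [ps /eqP pg].
by move: gD; rewrite mem_undup -pg map_f.
Qed.

Definition dec (r : R) : seq (G * R) :=
  proj1_sig (constructive_indefinite_description _ (hom_gen gr r)).
Lemma decP r : [/\ uniq (map fst (dec r)), (forall p, p \in dec r -> hom p.1 p.2)
  & r = \sum_(p <- dec r) p.2].
Proof. exact: (proj2_sig (constructive_indefinite_description _ (hom_gen gr r))). Qed.

Definition pi (g : G) (r : R) : R := \sum_(p <- dec r | p.1 == g) p.2.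
Definition supp (r : R) : seq G := map fst (dec r).

Lemma supp_uniq r : uniq (supp r). Proof. by case: (decP r). Qed.

Lemma K1 (s : seq (G * R)) g : (forall p, p \in s -> hom p.1 p.2) ->
  pi g (\sum_(p <- s) p.2) = \sum_(p <- s | p.1 == g) p.2.
Proof.
move=> hs; set r := \sum_(p <- s) p.2.
have [_ hd er] := decP r.
pose t := s ++ [seq (p.1, - p.2) | p <- dec r].
have ht : forall p, p \in t -> hom p.1 p.2.
  move=> p; rewrite mem_cat => /orP [/hs // | /mapP [q qd ->]] /=.
  by apply: Defs.homN; apply: hd.
have t0 : \sum_(p <- t) p.2 = 0 by rewrite big_cat big_map /= sumrN -er subrr.
have := K0 ht t0 g; rewrite big_cat big_map /= sumrN.
by move/eqP; rewrite subr_eq0 => /eqP ->.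
Qed.

Lemma pi_hom g r : hom g (pi g r).
Proof. by apply: hom_filt; case: (decP r). Qed.

Lemma pi_sum r : r = \sum_(g <- supp r) pi g r.
Proof.
have [u hd er] := decP r.
rewrite /pi /supp sum_partition // => p pd; exact: map_f.
Qed.

Lemma pi_supp g r : pi g r != 0 -> g \in supp r.
Proof.
move=> nz; apply/negPn/negP => gn; move: nz.
rewrite /pi big_seq_cond big1 ?eqxx // => p /andP [pd /eqP pg].
by move: gn; rewrite -pg map_f.
Qed.

Lemma pi_hom_id a x g : hom a x -> pi g x = if a == g then x else 0.
Proof.
move=> hx; have := @K1 [:: (a, x)] g; rewrite big_seq1 => ->.
  by rewrite big_cons big_nil /=; case: ifP; rewrite ?addr0.
by move=> p; rewrite inE => /eqP -> /=.
Qed.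

Lemma piD g x y : pi g (x + y) = pi g x + pi g y.
Proof.
have [_ hx ex] := decP x; have [_ hy ey] := decP y.
rewrite {1}ex {1}ey -big_cat K1 ?big_cat // => p.
by rewrite mem_cat => /orP [] ?; [exact: hx | exact: hy].
Qed.

Lemma pi0 g : pi g 0 = 0.
Proof. by have := @K1 [::] g; rewrite !big_nil; apply. Qed.

Lemma piN g x : pi g (- x) = - pi g x.
Proof. by apply/eqP; rewrite -subr_eq0 opprK -piD addNr pi0. Qed.

Lemma piB g x y : pi g (x - y) = pi g x - pi g y.
Proof. by rewrite piD piN. Qed.

Lemma pi_sumr g (I : Type) (r : seq I) (P : pred I) (F : I -> R) :
  pi g (\sum_(i <- r | P i) F i) = \sum_(i <- r | P i) pi g (F i).
Proof. by apply: (big_morph (pi g)); [exact: piD | exact: pi0]. Qed.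

Lemma pi_mulh a h g r : hom a h ->
  pi g (h * r) = \sum_(b <- supp r | a + b == g) h * pi b r.
Proof.
move=> hh; rewrite {1}(pi_sum r) big_distrr /=.
have := @K1 [seq (a + b, h * pi b r) | b <- supp r] g; rewrite !big_map /=; apply.
by move=> p /mapP [b _ ->] /=; apply: Defs.homM => //; apply: pi_hom.
Qed.

Lemma pi_mul g x y : pi g (x * y) =
  \sum_(a <- supp x) \sum_(b <- supp y | a + b == g) pi a x * pi b y.
Proof.
rewrite {1}(pi_sum x) big_distrl /= pi_sumr; apply: eq_bigr => a _.
exact: (pi_mulh g y (pi_hom a x)).
Qed.

Lemma pi_mulh_mem a h g r : hom a h -> exists q, pi g (h * r) = h * q.
Proof. by move=> hh; rewrite (pi_mulh g r hh) -big_distrr; eexists. Qed.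

Lemma pi_shift (Gc : cancellative G) a h b r : hom a h -> pi (a + b) (h * r) = h * pi b r.
Proof.
move=> hh; rewrite (pi_mulh _ r hh) (eq_bigl (fun b' => b' == b)); last first.
  by move=> b' /=; apply/eqP/eqP => [/Gc|->].
rewrite sum_pred1_uniq ?supp_uniq //; case: ifP => // bs.
case: (eqVneq (pi b r) 0) => [->|/pi_supp]; first by rewrite mulr0.
by rewrite bs.
Qed.

Lemma filt_uniq (s : seq (G * R)) p : uniq (map fst s) -> p \in s ->
  \sum_(q <- s | q.1 == p.1) q.2 = p.2.
Proof.
elim: s => // q s IH /= /andP [qn us]; rewrite inE big_cons => /orP [/eqP -> | ps].
  rewrite eqxx big_seq_cond big1 ?addr0 // => q' /andP [q's /eqP e].
  by move: qn; rewrite -e map_f.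
case: eqP => [e|_]; last exact: IH.
by move: qn; rewrite e map_f.
Qed.

Lemma comp_iff a x : is_component gr a x <-> x != 0 /\ exists g, x = pi g a.
Proof.
split.
  move=> [s [[us hs ea] /mapP [p ps ->]]].
  split; first by case: (hs p ps).
  exists p.1; rewrite ea K1 ?filt_uniq //.
  by move=> q /hs [].
move=> [nz [g xe]]; subst x.
exists [seq (d, pi d a) | d <- supp a & pi d a != 0]; split.
  split.
  - rewrite -map_comp (@eq_map _ _ _ id) // map_id.
    by rewrite filter_uniq // supp_uniq.
  - move=> p /mapP [d]; rewrite mem_filter => /andP [nzd _] -> /=.
    by split => //; apply: pi_hom.
  - rewrite big_map big_filter /= big_mkcond /= {1}(pi_sum a).
    by apply: eq_bigr => d _; case: eqP.
apply/mapP; exists (g, pi g a) => //; apply/mapP; exists g => //.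
by rewrite mem_filter nz pi_supp.
Qed.

End Basics.

Section Ideals.
Variable (R : comRingType).

Lemma span_ideal (S : R -> Prop) : is_ideal (Defs.span S).
Proof.
split.
- by exists [::]; rewrite big_nil.
- move=> x y [s1 [h1 ->]] [s2 [h2 ->]]; exists (s1 ++ s2); split; last by rewrite big_cat.
  by move=> p; rewrite mem_cat => /orP [] ?; [apply: h1 | apply: h2].
- move=> r x [s1 [h1 ->]]; exists [seq (r * p.1, p.2) | p <- s1]; split.
    move=> p /mapP [q qs] pe; rewrite pe /=; exact: h1.
  by rewrite big_map mulr_sumr; apply: eq_bigr => p _; rewrite mulrA.
Qed.

Lemma span_in (S : R -> Prop) x : S x -> Defs.span S x.
Proof.
move=> Sx; exists [:: (1, x)]; split; last by rewrite big_seq1 mul1r.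
by move=> p; rewrite inE => /eqP -> /=.
Qed.

Lemma span_sub (S I : R -> Prop) : is_ideal I -> (forall x, S x -> I x) ->
  forall x, Defs.span S x -> I x.
Proof.
case=> I0 ID IM hS x [s [hs ->]]; elim: s hs => [|p s IH] hs; first by rewrite big_nil.
rewrite big_cons; apply: ID.
  by apply: IM; apply: hS; apply: hs; exact: mem_head.
by apply: IH => q qs; apply: hs; rewrite inE qs orbT.
Qed.

Lemma ideal0 (I : R -> Prop) : is_ideal I -> I 0.
Proof. by case. Qed.
Lemma idealD (I : R -> Prop) x y : is_ideal I -> I x -> I y -> I (x + y).
Proof. by case=> _ h _; apply: h. Qed.
Lemma idealM (I : R -> Prop) r x : is_ideal I -> I x -> I (r * x).
Proof. by case=> _ _ h; apply: h. Qed.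
Lemma idealMr (I : R -> Prop) r x : is_ideal I -> I x -> I (x * r).
Proof. by rewrite mulrC; apply: idealM. Qed.
Lemma idealN (I : R -> Prop) x : is_ideal I -> I x -> I (- x).
Proof. by move=> hI hx; rewrite -mulN1r; apply: idealM. Qed.
Lemma idealB (I : R -> Prop) x y : is_ideal I -> I x -> I y -> I (x - y).
Proof. by move=> hI hx hy; apply: idealD => //; apply: idealN. Qed.
Lemma ideal_big (I : R -> Prop) (T : Type) (r : seq T) (P : pred T) (F : T -> R) :
  is_ideal I -> (forall i, P i -> I (F i)) -> I (\sum_(i <- r | P i) F i).
Proof.
move=> hI hF; apply: (big_ind I) => //; [exact: ideal0 | move=> x y; exact: idealD].
Qed.

Lemma zero_ideal_ideal : is_ideal (@zero_ideal R).
Proof.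
split; rewrite /zero_ideal //; first by move=> x y -> ->; rewrite addr0.
by move=> r x ->; rewrite mulr0.
Qed.

Definition FS (L : seq (R -> Prop)) := foldr (@Defs.ideal_sum R) (@zero_ideal R) L.

Lemma FS_ideal L : is_ideal (FS L).
Proof. by case: L => [|I L]; [exact: zero_ideal_ideal | exact: span_ideal]. Qed.

Lemma FS_in L k x : (k < size L)%N -> nth (@zero_ideal R) L k x -> FS L x.
Proof.
elim: L k => // I L IH k /= hk hx; apply: span_in.
by case: k hk hx => [|k] /= hk hx; [left | right; exact: IH hk hx].
Qed.

Lemma FS_sub L (J : R -> Prop) : is_ideal J ->
  (forall k x, (k < size L)%N -> nth (@zero_ideal R) L k x -> J x) ->
  forall x, FS L x -> J x.
Proof.
move=> hJ; elim: L => [|I L IH] hL x /=.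
  by rewrite /zero_ideal => ->; apply: ideal0.
apply: span_sub => // y [Iy|Ly]; first exact: (hL 0%N).
by apply: IH => // k z hk hz; apply: (hL k.+1).
Qed.

Lemma ideal_of_mul (I : R -> Prop) y : is_ideal I -> is_ideal (fun x => I (x * y)).
Proof.
move=> hI; split; first by rewrite mul0r; apply: ideal0.
  by move=> a b ha hb; rewrite mulrDl; apply: idealD.
by move=> r x hx; rewrite -mulrA; apply: idealM.
Qed.

Lemma span_mul (S T K : R -> Prop) : is_ideal K ->
  (forall x y, S x -> T y -> K (x * y)) ->
  forall x y, Defs.span S x -> Defs.span T y -> K (x * y).
Proof.
move=> hK h x y sx ty.
have hK' : forall z, Defs.span S z -> forall y, T y -> K (z * y).
  move=> z sz y' Ty'; apply: (span_sub (ideal_of_mul y' hK)) (sz) => w Sw.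
  exact: h.
rewrite mulrC; apply: (span_sub (ideal_of_mul x hK)) ty => w Tw.
by rewrite mulrC; apply: hK'.
Qed.

Lemma prod_sub (I J K : R -> Prop) : is_ideal K ->
  (forall x y, I x -> J y -> K (x * y)) -> forall z, ideal_prod I J z -> K z.
Proof.
move=> hK h; apply: span_sub => // z [x [y [Ix Jy ->]]]; exact: h.
Qed.

Lemma prod_in (I J : R -> Prop) x y : I x -> J y -> ideal_prod I J (x * y).
Proof. by move=> Ix Jy; apply: span_in; exists x, y. Qed.

End Ideals.

Section Cont.
Variables (G : nmodType) (R : idomainType) (gr : grading G R).
Local Notation hom := (Defs.hom gr).
Local Notation pi := (pi gr).
Local Notation supp := (supp gr).

Lemma pi_Cont a g : Cont gr a (pi g a).
Proof.
case: (eqVneq (pi g a) 0) => [->|nz]; first exact: ideal0 (span_ideal _).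
by apply: span_in; apply/comp_iff; split => //; exists g.
Qed.

Lemma Cont_sub a (I : R -> Prop) : is_ideal I -> (forall g, I (pi g a)) ->
  forall x, Cont gr a x -> I x.
Proof.
move=> hI h; apply: span_sub => // y /comp_iff [_ [g ->]]; exact: h.
Qed.

Lemma Cont_self a : Cont gr a a.
Proof.
rewrite [X in Cont gr a X](pi_sum gr a); apply: ideal_big; first exact: span_ideal.
by move=> g _; apply: pi_Cont.
Qed.

Lemma Af_ideal (f : {poly R}) : is_ideal (Af gr f).
Proof. exact: FS_ideal. Qed.

Lemma Af_pi (f : {poly R}) i g : Af gr f (pi g f`_i).
Proof.
case: (ltnP i (size f)) => hi.
  apply: (@FS_in _ _ i); first by rewrite size_map size_iota.
  by rewrite (nth_map 0%N) ?size_iota // nth_iota // add0n; apply: pi_Cont.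
by rewrite nth_default // pi0; apply: ideal0; apply: Af_ideal.
Qed.

Lemma Af_sub (f : {poly R}) (J : R -> Prop) : is_ideal J -> (forall i g, J (pi g f`_i)) ->
  forall x, Af gr f x -> J x.
Proof.
move=> hJ h; apply: FS_sub => // k x; rewrite size_map size_iota => hk.
rewrite (nth_map 0%N) ?size_iota // nth_iota // add0n.
by apply: Cont_sub => // g; apply: h.
Qed.

Lemma Af_coef (f : {poly R}) i : Af gr f f`_i.
Proof.
rewrite [X in Af gr f X](pi_sum gr); apply: ideal_big; first exact: Af_ideal.
by move=> g _; apply: Af_pi.
Qed.

Lemma Af_hom (f : {poly R}) x g : Af gr f x -> Af gr f (pi g x).
Proof.
pose J := fun x => forall g, Af gr f (pi g x).
have hA := Af_ideal f.
have hJ : is_ideal J.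
  split; rewrite /J.
  - by move=> g'; rewrite pi0; apply: ideal0.
  - by move=> a b ha hb g'; rewrite piD; apply: idealD.
  - move=> r a ha g'; rewrite pi_mul; apply: ideal_big => // b _.
    by apply: ideal_big => // c _; apply: idealM.
move=> hx; apply: (Af_sub hJ) hx g => i g1 g2.
rewrite (pi_hom_id _ (pi_hom gr g1 f`_i)); case: eqP => _; first exact: Af_pi.
exact: ideal0.
Qed.

Lemma Af_mul_sub (f g : {poly R}) x : Af gr (f * g) x -> ideal_prod (Af gr f) (Af gr g) x.
Proof.
have hP := span_ideal (fun z => exists x y, [/\ Af gr f x, Af gr g y & z = x * y]).
apply: Af_sub => // k c.
rewrite coefM pi_sumr; apply: ideal_big => // i _.
rewrite pi_mul; apply: ideal_big => // a _; apply: ideal_big => // b _.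
by apply: prod_in; apply: Af_pi.
Qed.

End Cont.

Section Frac.
Variables (R : idomainType) (K : fieldType) (tf : {rmorphism R -> K}).
Hypothesis tf_inj : injective tf.

Definition inR (x : K) := exists r, x = tf r.
Lemma inR_tf r : inR (tf r). Proof. by exists r. Qed.
Lemma inRD x y : inR x -> inR y -> inR (x + y).
Proof. by move=> [a ->] [b ->]; exists (a + b); rewrite rmorphD. Qed.
Lemma inRM x y : inR x -> inR y -> inR (x * y).
Proof. by move=> [a ->] [b ->]; exists (a * b); rewrite rmorphM. Qed.
Lemma inR0 : inR 0. Proof. by exists 0; rewrite rmorph0. Qed.
Lemma inR1 : inR 1. Proof. by exists 1; rewrite rmorph1. Qed.
Lemma inR_sum (T : Type) (r : seq T) (P : pred T) (F : T -> K) :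
  (forall i, P i -> inR (F i)) -> inR (\sum_(i <- r | P i) F i).
Proof. by move=> h; apply: (big_ind inR) => //; [exact: inR0 | exact: inRD]. Qed.

Lemma tf_neq0 a : a != 0 -> tf a != 0.
Proof. by move=> a0; apply: contra a0; rewrite -(rmorph0 tf) (inj_eq tf_inj). Qed.

Definition colon (L : seq R) (t : K) := forall x, x \in L -> inR (t * tf x).
Definition Inv (L : seq R) := exists s : seq (K * R),
  (forall q, q \in s -> q.2 \in L /\ colon L q.1) /\ \sum_(q <- s) q.1 * tf q.2 = 1.

Lemma Inv1 a : a != 0 -> Inv [:: a].
Proof.
move=> a0; have A0 := tf_neq0 a0.
exists [:: ((tf a)^-1, a)]; split; last by rewrite big_seq1 /= mulVf.
move=> q; rewrite inE => /eqP -> /=; split; first exact: mem_head.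
by move=> x; rewrite inE => /eqP ->; rewrite mulVf //; apply: inR1.
Qed.

Lemma Inv2 a b r s y y' : a != 0 -> b != 0 -> a * b = r * (a * a) + s * (b * b) ->
  r * a = b * y -> s * b = a * y' -> Inv [:: a; b].
Proof.
move=> a0 b0 e ey ey'.
have A0 := tf_neq0 a0; have B0 := tf_neq0 b0.
have e1 : tf a * tf b = tf r * (tf a * tf a) + tf s * (tf b * tf b).
  by rewrite -!rmorphM -rmorphD e.
have e2 : tf r * tf a = tf b * tf y by rewrite -!rmorphM ey.
have e3 : tf s * tf b = tf a * tf y' by rewrite -!rmorphM ey'.
exists [:: (tf r / tf b, a); (tf s / tf a, b)]; split.
  move=> q; rewrite inE => /orP [/eqP -> | ]; last rewrite inE => /eqP ->.
    split; first by rewrite !inE eqxx.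
    move=> x; rewrite !inE => /orP [] /eqP ->.
      have -> : tf r / tf b * tf a = tf y.
        by apply: (mulfI B0); rewrite -e2; field.
      exact: inR_tf.
    have -> : tf r / tf b * tf b = tf r by field.
    exact: inR_tf.
  split; first by rewrite !inE eqxx orbT.
  move=> x; rewrite !inE => /orP [] /eqP ->.
    have -> : tf s / tf a * tf a = tf s by field.
    exact: inR_tf.
  have -> : tf s / tf a * tf b = tf y'.
    by apply: (mulfI A0); rewrite -e3; field.
  exact: inR_tf.
rewrite big_cons big_seq1 /=.
have -> : tf r / tf b * tf a + tf s / tf a * tf b =
  (tf r * (tf a * tf a) + tf s * (tf b * tf b)) / (tf a * tf b).
  by field; rewrite A0 B0.
by rewrite -e1 divff // mulf_neq0.
Qed.


Lemma Inv_cons2 b c A : Inv (b :: A) -> Inv (c :: A) -> Inv [:: b; c] ->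
  Inv [:: b, c & A].
Proof.
move=> [s1 [h1 E1]] [s2 [h2 E2]] [s3 [h3 E3]].
pose F (q1 q2 q3 : K * R) : K * R :=
  if (q1.2 == b) || (q2.2 == c) then (q1.1 * tf q1.2 * (q2.1 * tf q2.2) * q3.1, q3.2)
  else (q1.1 * (q2.1 * tf q2.2) * (q3.1 * tf q3.2), q1.2).
exists [seq F q1 q23.1 q23.2 | q1 <- s1, q23 <- [seq (q2, q3) | q2 <- s2, q3 <- s3]].
split.
  move=> q /allpairsPdep [q1 [q23 [q1s /allpairsP [[q2 q3] [/= q2s q3s ->]] ->]]] /=.
  have [m1 c1] := h1 q1 q1s; have [m2 c2] := h2 q2 q2s; have [m3 c3] := h3 q3 q3s.
  have P1 : forall z, z \in b :: A -> inR (q1.1 * tf z) by [].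
  have P2 : forall z, z \in c :: A -> inR (q2.1 * tf z) by [].
  have P3 : forall z, z \in [:: b; c] -> inR (q3.1 * tf z) by [].
  rewrite /F; case: ifP => hbc /=.
    split.
      by move: m3; rewrite !inE => /orP [] ->; rewrite ?orbT.
    move=> x; rewrite inE => /orP [/eqP -> | ].
      rewrite -mulrA; apply: inRM; last by apply: P3; rewrite inE eqxx.
      by apply: inRM; [apply: P1 | apply: P2].
    rewrite inE => /orP [/eqP -> | xA].
      rewrite -mulrA; apply: inRM; last by apply: P3; rewrite !inE eqxx orbT.
      by apply: inRM; [apply: P1 | apply: P2].
    case/orP: hbc => /eqP e.
      have -> : q1.1 * tf q1.2 * (q2.1 * tf q2.2) * q3.1 * tf x =
        q1.1 * tf x * (q2.1 * tf q2.2) * (q3.1 * tf q1.2) by ring.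
      apply: inRM; last by apply: P3; rewrite e inE eqxx.
      by apply: inRM; [apply: P1; rewrite inE xA orbT | apply: P2].
    have -> : q1.1 * tf q1.2 * (q2.1 * tf q2.2) * q3.1 * tf x =
      q1.1 * tf q1.2 * (q2.1 * tf x) * (q3.1 * tf q2.2) by ring.
    apply: inRM; last by apply: P3; rewrite e !inE eqxx orbT.
    by apply: inRM; [apply: P1 | apply: P2; rewrite inE xA orbT].
  move/negbT: hbc; rewrite negb_or => /andP [nb nc].
  have q1A : q1.2 \in A by move: m1; rewrite inE (negbTE nb).
  have q2A : q2.2 \in A by move: m2; rewrite inE (negbTE nc).
  split; first by rewrite !inE q1A !orbT.
  move=> x; rewrite inE => /orP [/eqP -> | ].
    have -> : q1.1 * (q2.1 * tf q2.2) * (q3.1 * tf q3.2) * tf b =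
      q1.1 * tf b * (q2.1 * tf q2.2) * (q3.1 * tf q3.2) by ring.
    apply: inRM; last by apply: P3.
    by apply: inRM; [apply: P1; rewrite inE eqxx | apply: P2].
  rewrite inE => /orP [/eqP -> | xA].
    have -> : q1.1 * (q2.1 * tf q2.2) * (q3.1 * tf q3.2) * tf c =
      q1.1 * tf q2.2 * (q2.1 * tf c) * (q3.1 * tf q3.2) by ring.
    apply: inRM; last by apply: P3.
    by apply: inRM; [apply: P1; rewrite inE q2A orbT | apply: P2; rewrite inE eqxx].
  have -> : q1.1 * (q2.1 * tf q2.2) * (q3.1 * tf q3.2) * tf x =
    q1.1 * tf x * (q2.1 * tf q2.2) * (q3.1 * tf q3.2) by ring.
  apply: inRM; last by apply: P3.
  by apply: inRM; [apply: P1; rewrite inE xA orbT | apply: P2].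
rewrite big_allpairs_dep /=.
have -> : 1 = (\sum_(q <- s1) q.1 * tf q.2) * (\sum_(q <- s2) q.1 * tf q.2) *
   (\sum_(q <- s3) q.1 * tf q.2) by rewrite E1 E2 E3 !mul1r.
rewrite -mulrA big_distrl /=; apply: eq_bigr => q1 _.
rewrite big_allpairs /= big_distrl /= big_distrr /=; apply: eq_bigr => q2 _.
rewrite big_distrr /= big_distrr /=; apply: eq_bigr => q3 _.
by rewrite /F; case: ifP => _ /=; ring.
Qed.

Lemma Inv_all (L : seq R) : L != [::] -> (forall x, x \in L -> x != 0) ->
  (forall a b, a \in L -> b \in L -> Inv [:: a; b]) -> Inv L.
Proof.
move: {2}(size L) (leqnn (size L)) => n; elim: n L => [|n IH] L.
  by rewrite leqn0 size_eq0 => ->.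
case: L => [|b [|c A]] // hs _ nz h2.
  by apply: Inv1; apply: nz; rewrite mem_head.
case: A hs nz h2 => [|a A] hs nz h2.
  by apply: h2; rewrite !inE eqxx ?orbT.
apply: Inv_cons2.
- apply: IH; [by move: hs; rewrite /= ltnS | by [] | | ].
  + move=> x hx; apply: nz; move: hx; rewrite !inE.
    by case/orP => ->; rewrite ?orbT.
  + move=> x y; rewrite !inE => hx hy; apply: h2; rewrite !inE.
      by case/orP: hx => ->; rewrite ?orbT.
    by case/orP: hy => ->; rewrite ?orbT.
- apply: IH; [by move: hs; rewrite /= ltnS | by [] | | ].
  + move=> x hx; apply: nz; move: hx; rewrite !inE.
    by case/orP => ->; rewrite ?orbT.
  + move=> x y; rewrite !inE => hx hy; apply: h2; rewrite !inE.
      by case/orP: hx => ->; rewrite ?orbT.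
    by case/orP: hy => ->; rewrite ?orbT.
- by apply: h2; rewrite !inE eqxx ?orbT.
Qed.

Lemma colon_span (L : seq R) t x : colon L t -> Defs.span (fun y => y \in L) x ->
  inR (tf x * t).
Proof.
move=> ht; have hI : is_ideal (fun x => inR (tf x * t)).
  split.
  - by rewrite rmorph0 mul0r; apply: inR0.
  - by move=> a c ha hc; rewrite rmorphD mulrDl; apply: inRD.
  - by move=> r a ha; rewrite rmorphM -mulrA; apply: inRM => //; apply: inR_tf.
apply: (span_sub hI) => y yL; rewrite mulrC; exact: ht.
Qed.

End Frac.

Section FracInst.
Variable R : idomainType.
Local Notation tf := (@FracField.tofrac R).
Local Notation inR := (@inR R _ tf).
Local Notation colon := (@colon R _ tf).
Local Notation Inv := (@Inv R _ tf).
Local Notation inR0 := (@inR0 R _ tf).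
Local Notation inRD := (@inRD R _ tf).
Local Notation inRM := (@inRM R _ tf).
Local Notation inR_tf := (@inR_tf R _ tf).
Local Notation inR_sum := (@inR_sum R _ tf).
Lemma Inv_invertible (I : R -> Prop) (L : seq R) :
  ideal_eq I (Defs.span (fun x => x \in L)) -> Inv L ->
  (exists x, x \in L /\ x != 0) -> invertible_ideal I.
Proof.
move=> hIL [s [hs E]] [d [dL d0]].
exists (colon L); split.
- by move=> x _; rewrite mul0r; apply: inR0.
- by move=> x y hx hy z hz; rewrite mulrDl; apply: inRD; [apply: hx | apply: hy].
- by move=> r x hx z hz; rewrite -mulrA; apply: inRM; [apply: inR_tf | apply: hx].
- by exists d; split => // x hx; rewrite mulrC; apply: hx.
move=> k; split.
  move=> [s' [hs' ->]]; rewrite big_seq; apply: inR_sum => p ps.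
  have [Ip Jp] := hs' p ps.
  by apply: colon_span Jp _; apply/hIL.
move=> [r ->]; exists [seq (r * q.2, q.1) | q <- s]; split.
  move=> p /mapP [q qs ->] /=; have [qL qc] := hs q qs; split => //.
  by apply/hIL; apply: idealM; [exact: span_ideal | exact: span_in].
rewrite big_map /= -[tf r]mulr1 -E mulr_sumr; apply: eq_bigr => q _.
by rewrite rmorphM -mulrA [tf q.2 * _]mulrC.
Qed.

End FracInst.

Section Back.
Variables (G : nmodType) (R : idomainType) (gr : grading G R).
Local Notation hom := (Defs.hom gr).
Local Notation pi := (pi gr).
Local Notation supp := (supp gr).
Local Notation Af := (Af gr).
Hypothesis Gauss : forall f g : {poly R},
  ideal_eq (ideal_prod (Af f) (Af g)) (Af (f * g)).

Lemma span2 (u v x : R) : Defs.span (fun z => z = u \/ z = v) x ->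
  exists r s, x = r * u + s * v.
Proof.
move=> [l [hl ->]]; elim: l hl => [|p l IH] hl.
  by exists 0, 0; rewrite big_nil !mul0r addr0.
have [r [s e]] : exists r s, \sum_(p <- l) p.1 * p.2 = r * u + s * v.
  by apply: IH => q ql; apply: hl; rewrite inE ql orbT.
rewrite big_cons e; case: (hl p (mem_head _ _)) => ->.
  by exists (p.1 + r), s; rewrite mulrDl addrA.
by exists r, (p.1 + s); rewrite mulrDl addrCA addrA.
Qed.

Lemma pi_hom_span a x g : hom a x -> Defs.span (fun z => z = x) (pi g x).
Proof.
move=> hx; rewrite (pi_hom_id _ hx); case: eqP => _; first by apply: span_in.
exact: ideal0 (span_ideal _).
Qed.

Lemma gauss_rs a b al be : hom al a -> hom be b ->
  exists r s, a * b = r * (a * a) + s * (b * b).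
Proof.
move=> ha hb.
pose f := a%:P + b%:P * 'X; pose g := a%:P - b%:P * 'X.
have Afa : Af f a.
  by have := Af_coef gr f 0; rewrite coefD coefC coefMX /= addr0.
have Agb : Af g b.
  have := Af_coef gr g 1; rewrite coefB coefC coefMX /= coefC /= sub0r.
  by move/(idealN (Af_ideal gr g)); rewrite opprK.
have := (Gauss f g (a * b)).1 (prod_in Afa Agb).
have -> : f * g = (a * a)%:P - (b * b)%:P * 'X^2.
  by rewrite /f /g !polyCM; ring.
move=> H.
have hS := span_ideal (fun z => z = a * a \/ z = b * b).
have : Defs.span (fun z => z = a * a \/ z = b * b) (a * b).
  apply: (Af_sub hS) H => i gg.
  rewrite coefB coefC coefCM coefXn piB; apply: idealB => //.
    case: eqP => _; last by rewrite pi0; apply: ideal0.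
    apply: (span_sub hS (S := fun z => z = a * a)); last first.
      exact: pi_hom_span (Defs.homM ha ha).
    by move=> z ->; apply: span_in; left.
  case: eqP => _; last by rewrite mulr0 pi0; apply: ideal0.
  rewrite mulr1; apply: (span_sub hS (S := fun z => z = b * b)); last first.
    exact: pi_hom_span (Defs.homM hb hb).
  by move=> z ->; apply: span_in; right.
move/span2 => [r [s e]]; by exists r, s.
Qed.


Lemma span1 (u x : R) : Defs.span (fun z => z = u) x -> exists r, x = r * u.
Proof.
move=> [l [hl ->]]; elim: l hl => [|p l IH] hl.
  by exists 0; rewrite big_nil !mul0r.
have [r e] : exists r, \sum_(p <- l) p.1 * p.2 = r * u.
  by apply: IH => q ql; apply: hl; rewrite inE ql orbT.
by rewrite big_cons e (hl p (mem_head _ _)); exists (p.1 + r); rewrite mulrDl.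
Qed.

Lemma gauss_div a b r s al be : hom al a -> hom be b -> b != 0 ->
  a * b = r * (a * a) + s * (b * b) -> exists y, r * a = b * y.
Proof.
move=> ha hb b0 e.
pose f := b%:P * 'X - (r * a)%:P; pose g := b%:P * 'X + (r * a - b)%:P.
have Afr : Af f (r * a).
  have := Af_coef gr f 0; rewrite coefB coefMX !coefC /= sub0r.
  by move/(idealN (Af_ideal gr f)); rewrite opprK.
have Agr : Af g (r * a).
  have h0 := Af_coef gr g 0; have h1 := Af_coef gr g 1.
  move: h0 h1; rewrite !coefD !coefMX !coefC /= add0r addr0 => h0 h1.
  by have := idealD (Af_ideal gr g) h0 h1; rewrite subrK.
have := (Gauss f g _).1 (prod_in Afr Agr).
have -> : f * g = (b * b)%:P * ('X^2 - 'X + (r * s)%:P).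
  have e1 : a * b - r * (a * a) = s * (b * b) by rewrite e; ring.
  have e' : r * a * b - r * a * (r * a) = r * s * (b * b).
    have -> : r * a * b - r * a * (r * a) = r * (a * b - r * (a * a)) by ring.
    by rewrite e1; ring.
  transitivity ((b * b)%:P * 'X^2 - (b * b)%:P * 'X + (r * s * (b * b))%:P);
    last by rewrite !polyCM; ring.
  by rewrite -e' /f /g !(rmorphB, rmorphM) /=; ring.
move=> H.
have hS := span_ideal (fun z => z = b * b).
have : Defs.span (fun z => z = b * b) (r * a * (r * a)).
  apply: (Af_sub hS) H => i gg.
  rewrite coefCM.
  have [q ->] := pi_mulh_mem gg (('X^2 - 'X + (r * s)%:P)`_i) (Defs.homM hb hb).
  by rewrite [_ * q]mulrC; apply: idealM; [exact: hS | exact: span_in].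
move/span1 => [w ew].
exists (w + r * s); apply: (mulfI b0).
have -> : b * (b * (w + r * s)) = w * (b * b) + r * (s * (b * b)) by ring.
rewrite -ew.
have -> : r * a * (r * a) + r * (s * (b * b)) = r * (r * (a * a) + s * (b * b)) by ring.
by rewrite -e; ring.
Qed.

Lemma tofrac_inj : injective (@FracField.tofrac R).
Proof. by move=> x y /eqP; rewrite tofrac_eq => /eqP. Qed.

Lemma back_main : graded_Prufer gr.
Proof.
move=> I [hI hc] [s hs] [x0 [Ix0 x00]].
pose L := flatten [seq [seq pi g x | g <- supp x & pi g x != 0] | x <- s].
have Lnz : forall y, y \in L -> y != 0 /\ exists g x, x \in s /\ y = pi g x.
  move=> y /flatten_mapP [x xs] /mapP [g]; rewrite mem_filter => /andP [nz _] ->.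
  by split => //; exists g, x.
have hIL : ideal_eq I (Defs.span (fun y => y \in L)).
  move=> z; split.
  - move/hs; apply: span_sub; first exact: span_ideal.
    move=> x xs; rewrite (pi_sum gr x) (bigID (fun g => pi g x != 0)) /=.
    rewrite [X in _ + X]big1 ?addr0; last by move=> g /negPn /eqP.
    apply: ideal_big; first exact: span_ideal.
    move=> g nz; apply: span_in; apply/flatten_mapP; exists x => //.
    by apply/mapP; exists g => //; rewrite mem_filter nz pi_supp.
  - apply: span_sub => // y /Lnz [nz [g [x [xs ey]]]]; subst y.
    apply: (hc x); first by apply/(hs x); apply: span_in.
    by apply/comp_iff; split => //; exists g.
have L0 : L != [::].
  apply/eqP => L0; move: Ix0 => /hIL; rewrite L0 => [[l [hl el]]].
  case: l hl el => [|p l] hl; last by have := hl p (mem_head _ _).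
  by rewrite big_nil => e; rewrite e eqxx in x00.
have Lx : exists x, x \in L /\ x != 0.
  move: L0 Lnz; case: (L) => // y l _ h; exists y; split; first exact: mem_head.
  by case: (h y (mem_head _ _)).
apply: (Inv_invertible hIL) => //.
apply: (Inv_all tofrac_inj) => //; first by move=> y /Lnz [].
move=> a b /Lnz [a0 [ga [xa [_ ea]]]] /Lnz [b0 [gb [xb [_ eb]]]]; subst a b.
have ha := pi_hom gr ga xa; have hb := pi_hom gr gb xb.
have [r [s' e]] := gauss_rs ha hb.
have [y ey] := gauss_div ha hb b0 e.
have e2 : pi gb xb * pi ga xa = s' * (pi gb xb * pi gb xb) + r * (pi ga xa * pi ga xa).
  by rewrite mulrC e addrC.
have [y' ey'] := gauss_div hb ha a0 e2.
exact: (Inv2 tofrac_inj a0 b0 e ey ey').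
Qed.

End Back.

Section Cone.

Lemma rsubD (m n1 n2 : nat) (A B : 'M[int]_(m, n1 + n2)) :
  rsubmx (A + B) = rsubmx A + rsubmx B.
Proof. by rewrite -{1}(hsubmxK A) -{1}(hsubmxK B) add_row_mx row_mxKr. Qed.

Lemma rsubN (m n1 n2 : nat) (A : 'M[int]_(m, n1 + n2)) :
  rsubmx (- A) = - rsubmx A.
Proof. by rewrite -{1}(hsubmxK A) opp_row_mx row_mxKr. Qed.

Lemma row_mx0_Mn n k (x : 'rV[int]_n) :
  row_mx (0 : 'rV_1) x *+ k = row_mx 0 (x *+ k).
Proof.
elim: k => [|k IH]; first by rewrite !mulr0n row_mx0.
by rewrite !mulrS IH add_row_mx addr0.
Qed.

Lemma rowK n (z : 'rV[int]_(1 + n)) : z 0 0 = 0 -> row_mx 0 (rsubmx z) = z.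
Proof.
move=> z0; rewrite -[RHS]hsubmxK; congr row_mx.
apply/matrixP => i j; rewrite (ord1 i) (ord1 j) !mxE.
by have -> : lshift n (0 : 'I_1) = 0 by apply/val_inj.
Qed.

Definition subgrp n (L : 'rV[int]_n -> Prop) :=
  [/\ L 0, forall x y, L x -> L y -> L (x - y) & forall m x, L (x *+ m.+1) -> L x].

Section SubGrp.
Variables (n : nat) (L : 'rV[int]_n -> Prop).
Hypothesis hL : subgrp L.
Lemma sgN x : L x -> L (- x).
Proof. by case: hL => L0 LB _ h; rewrite -sub0r; apply: LB. Qed.
Lemma sgD x y : L x -> L y -> L (x + y).
Proof. by case: hL => L0 LB _ hx hy; rewrite -[y]opprK; apply: LB => //; apply: sgN. Qed.
Lemma sgMn x k : L x -> L (x *+ k).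
Proof.
case: hL => L0 _ _ hx; elim: k => [|k IH]; first by rewrite mulr0n.
by rewrite mulrS; apply: sgD.
Qed.
Lemma sgZ x (k : int) : L x -> L (k *: x).
Proof.
move=> hx; case: k => k; first by rewrite -natz scaler_nat; apply: sgMn.
by rewrite NegzE scaleNr -natz scaler_nat; apply: sgN; apply: sgMn.
Qed.
End SubGrp.

Lemma cone n (L : 'rV[int]_n -> Prop) : subgrp L -> exists P : 'rV[int]_n -> Prop,
  [/\ forall x y, P x -> P y -> P (x + y), forall x, P x \/ P (- x)
    & forall x, (P x /\ P (- x)) <-> L x].
Proof.
elim: n L => [|n IH] L hL.
  case: hL => L0 _ _; exists (fun _ => True); split => [//|x|x]; first by left.
  by split => // _; rewrite (thinmx0 x).
move: L hL; rewrite -[n.+1]/(1 + n)%N => L hL.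
have [L0 LB LS] := hL.
pose L' := fun y : 'rV[int]_n => L (row_mx (0 : 'rV_1) y).
have hL' : subgrp L'.
  split.
  - by rewrite /L' row_mx0.
  - move=> x y; rewrite /L' => hx hy; have := LB _ _ hx hy.
    by rewrite opp_row_mx add_row_mx subrr.
  - move=> m x; rewrite /L' => h; apply: (LS m); by rewrite row_mx0_Mn.
have [P' [P'D P'N P'L]] := IH L' hL'.
case: (classic (exists w, L w /\ w 0 0 != 0)) => [[w [Lw w0]] | nA].
  pose w' := if 0 < w 0 0 then w else - w.
  have Lw' : L w' by rewrite /w'; case: ifP => _ //; apply: sgN.
  have m0 : 0 < w' 0 0.
    rewrite /w'; have [h|h|h] := ltrgtP 0 (w 0 0) => //.
      by rewrite mxE oppr_gt0.
    by move: w0; rewrite -h eqxx.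
  set m := w' 0 0 in m0.
  pose psi := fun z : 'rV[int]_(1 + n) => rsubmx (m *: z - z 0 0 *: w').
  have psiD : forall x y, psi (x + y) = psi x + psi y.
    move=> x y; rewrite /psi -rsubD; congr rsubmx.
    by rewrite mxE scalerDr scalerDl opprD addrACA.
  have psiN : forall x, psi (- x) = - psi x.
    move=> x; rewrite /psi -rsubN; congr rsubmx.
    by rewrite mxE scalerN scaleNr opprD opprK.
  have psiL : forall z, row_mx 0 (psi z) = m *: z - z 0 0 *: w'.
    move=> z; apply: rowK.
    by rewrite !mxE [_ * w' 0 0]mulrC subrr.
  exists (fun z => P' (psi z)); split.
  - by move=> x y hx hy; rewrite psiD; apply: P'D.
  - by move=> x; rewrite psiN; apply: P'N.
  - move=> z; rewrite psiN P'L /L' psiL; split => h.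
      have : L (m *: z).
        rewrite -(subrK (z 0 0 *: w') (m *: z)); apply: sgD => //.
        exact: sgZ.
      have [k mk] : exists k, m = k.+1%:R.
        exists `|m|.-1; rewrite prednK ?absz_gt0 ?gt_eqF //.
        by rewrite natz gtz0_abs.
      by rewrite mk scaler_nat; apply: LS.
    by apply: LB; apply: sgZ.
have hA : forall w, L w -> w 0 0 = 0.
  move=> w Lw; apply/eqP; apply/negPn/negP => h; apply: nA; by exists w.
exists (fun z : 'rV[int]_(1 + n) => 0 < z 0 0 \/ (z 0 0 = 0 /\ P' (rsubmx z))); split.
- move=> x y; rewrite mxE rsubD.
  case=> [hx|[hx px]] [hy|[hy py]].
  + by left; apply: addr_gt0.
  + by left; rewrite hy addr0.
  + by left; rewrite hx add0r.
  + by right; split; [rewrite hx hy addr0 | apply: P'D].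
- move=> x; rewrite mxE rsubN oppr_gt0.
  have [h|h|h] := ltrgtP 0 (x 0 0).
  + by left; left.
  + by right; left.
  + case: (P'N (rsubmx (x : 'rV_(1 + n)))) => hp.
      by left; right; split.
    by right; right; split => //; rewrite -h oppr0.
- move=> x; rewrite mxE rsubN oppr_gt0; split.
    case=> [[h1|[h1 p1]] [h2|[h2 p2]]].
    + by move: (lt_trans h2 h1); rewrite ltxx.
    + by move/eqP: h2; rewrite oppr_eq0 => /eqP h2; rewrite h2 ltxx in h1.
    + by rewrite h1 ltxx in h2.
    + by rewrite -(rowK h1); apply/P'L.
  move=> Lx; have x0 := hA x Lx.
  have : L' (rsubmx (x : 'rV_(1 + n))) by rewrite /L' rowK.
  move/P'L => [p1 p2]; split; right; split => //.
  by rewrite x0 oppr0.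
Qed.

End Cone.

Definition zpos (k : int) : nat := if 0 <= k then `|k|%N else 0%N.
Definition zneg (k : int) : nat := if 0 <= k then 0%N else `|k|%N.

Lemma zposnegE k : (zpos k)%:Z - (zneg k)%:Z = k.
Proof. by case: k => n; rewrite /zpos /zneg /= ?subr0 // sub0r NegzE. Qed.

Lemma zpos_id x y :
  (zpos (x - y) + zneg x + zpos y = zneg (x - y) + zpos x + zneg y)%N.
Proof.
have h1 := zposnegE x; have h2 := zposnegE y; have h3 := zposnegE (x - y).
lia.
Qed.

Lemma zposM a m : zpos (a * m.+1%:R) = (zpos a * m.+1)%N.
Proof.
by rewrite /zpos pmulr_lge0 ?ltr0Sn //; case: ifP; rewrite ?abszM ?natz ?absz_nat.
Qed.
Lemma znegM a m : zneg (a * m.+1%:R) = (zneg a * m.+1)%N.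
Proof.
by rewrite /zneg pmulr_lge0 ?ltr0Sn //; case: ifP; rewrite ?abszM ?natz ?absz_nat.
Qed.

Lemma zposD a b : 0 <= a -> 0 <= b -> zpos (a + b) = (zpos a + zpos b)%N.
Proof. by case: a => // a; case: b => // b _ _; rewrite -PoszD. Qed.

Lemma zneg_nn a : 0 <= a -> zneg a = 0%N.
Proof. by rewrite /zneg => ->. Qed.

Lemma mxMn_entry m n (A : 'M[int]_(m, n)) k i j : (A *+ k) i j = A i j *+ k.
Proof.
elim: k => [|k IH]; first by rewrite !mulr0n mxE.
by rewrite !mulrS mxE IH.
Qed.

Section GOrder.
Variable G : nmodType.
Hypothesis Gc : cancellative G.
Hypothesis Gt : quotient_torsion_free G.
Variable S : seq G.
Local Notation n := (size S).

Definition pp (z : 'rV[int]_n) : G := \sum_(i < n) (nth 0 S i) *+ zpos (z 0 i).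
Definition np (z : 'rV[int]_n) : G := \sum_(i < n) (nth 0 S i) *+ zneg (z 0 i).

Lemma canc_r (a d b : G) : a + b = d + b -> a = d.
Proof. by rewrite ![_ + b]addrC => /Gc. Qed.

Lemma key_id x y : pp (x - y) + np x + pp y = np (x - y) + pp x + np y.
Proof.
rewrite /pp /np -!big_split /=; apply: eq_bigr => i _.
by rewrite -!mulrnDr !mxE zpos_id.
Qed.

Definition Lg (z : 'rV[int]_n) := pp z = np z.

Lemma Lg_subgrp : subgrp Lg.
Proof.
split.
- by rewrite /Lg /pp /np !big1 // => i _; rewrite mxE /zpos /zneg /= mulr0n.
- move=> x y; rewrite /Lg => hx hy; have := key_id x y.
  rewrite hx hy => /canc_r /canc_r.
  done.
- move=> m x; rewrite /Lg /pp /np.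
  have E : forall i, (x *+ m.+1) 0 i = x 0 i * m.+1%:R.
    by move=> i; rewrite mxMn_entry mulr_natr.
  rewrite (eq_bigr (fun i : 'I_n => nth 0 S i *+ zpos (x 0 i) *+ m.+1)); last first.
    by move=> i _; rewrite E zposM mulrnA.
  rewrite [X in _ = X](eq_bigr (fun i : 'I_n => nth 0 S i *+ zneg (x 0 i) *+ m.+1)); last first.
    by move=> i _; rewrite E znegM mulrnA.
  by rewrite !sumrMnl => /Gt.
Qed.

Definition nn (z : 'rV[int]_n) := forall i, 0 <= z 0 i.

Lemma np_nn z : nn z -> np z = 0.
Proof. by move=> hz; rewrite /np big1 // => i _; rewrite zneg_nn. Qed.

Lemma pp_add z w : nn z -> nn w -> pp (z + w) = pp z + pp w.
Proof.
move=> hz hw; rewrite /pp -big_split /=; apply: eq_bigr => i _.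
by rewrite mxE zposD // mulrnDr.
Qed.

Lemma nn_add z w : nn z -> nn w -> nn (z + w).
Proof. by move=> hz hw i; rewrite mxE addr_ge0. Qed.

Lemma rep_L e e2 : nn e -> nn e2 -> (pp e = pp e2 <-> Lg (e - e2)).
Proof.
move=> h1 h2; have := key_id e e2; rewrite (np_nn h1) (np_nn h2) !addr0 => k.
split => [E|].
  by rewrite /Lg; apply: (@canc_r _ _ (pp e2)); rewrite k E.
rewrite /Lg => E; apply/esym; apply: (Gc (a := np (e - e2))).
by rewrite -k E.
Qed.

Definition inM (a : G) := exists e, nn e /\ a = pp e.

Lemma inM0 : inM 0.
Proof.
exists 0; split; first by move=> i; rewrite mxE.
by rewrite /pp big1 // => i _; rewrite mxE /zpos /= mulr0n.
Qed.

Lemma inMD a b : inM a -> inM b -> inM (a + b).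
Proof.
move=> [e [he ->]] [f [hf ->]]; exists (e + f); split; first exact: nn_add.
by rewrite pp_add.
Qed.

Lemma inMS a : a \in S -> inM a.
Proof.
move=> aS; have hi : (index a S < n)%N by rewrite index_mem.
pose i := Ordinal hi.
exists (delta_mx 0 i); split.
  by move=> j; rewrite mxE; case: (_ && _).
rewrite /pp (bigD1 i) //= big1 ?addr0.
  by rewrite mxE !eqxx /zpos /= nth_index.
move=> j ji; rewrite mxE eqxx /= (negbTE ji) /zpos /=.
by rewrite mulr0n.
Qed.

End GOrder.

Lemma order_exists (G : nmodType) (Gc : cancellative G)
  (Gt : quotient_torsion_free G) (S : seq G) :
  exists (M : G -> Prop) (lt : G -> G -> Prop),
  [/\ M 0, (forall a b, M a -> M b -> M (a + b)), (forall a, a \in S -> M a)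
    & (forall a, ~ lt a a)] /\
  [/\ (forall a b c, lt a b -> lt b c -> lt a c),
      (forall a b, M a -> M b -> [\/ a = b, lt a b | lt b a])
    & (forall a b c, M c -> lt a b -> lt (a + c) (b + c))].
Proof.
have [P [PD PN PL]] := cone (@Lg_subgrp G Gc Gt S).
have LP : forall x, Lg x -> P x by move=> x /PL [].
pose lt := fun a b : G => a != b /\ exists e e',
  [/\ nn e, nn e', a = pp e, b = pp e' & P (e' - e)].
exists (inM S), lt; split; split.
- exact: inM0.
- exact: inMD.
- exact: inMS.
- by move=> a []; rewrite eqxx.
- move=> a b c [ab [e1 [e1' [h1 h1' Ea Eb p1]]]] [_ [e2 [e2' [h2 h2' E2 Ec p2]]]].
  subst a b c.
  have L12 : Lg (e2 - e1') by apply/(rep_L Gc) => //.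
  split.
    apply/negP => /eqP E; have L3 : Lg (e1 - e2') by apply/(rep_L Gc).
    move/negP: ab; apply; apply/eqP; apply/(rep_L Gc h1 h1'); apply/PL; split.
      have -> : e1 - e1' = (e1 - e2') + (e2' - e2) + (e2 - e1').
        by rewrite !addrA subrK subrK.
      by apply: (PD); [apply: (PD); [apply: (LP) | ] | apply: (LP)].
    by rewrite opprB.
  exists e1, e2'; split => //.
  have -> : e2' - e1 = (e2' - e2) + (e2 - e1') + (e1' - e1).
    by rewrite !addrA subrK subrK.
  by apply: (PD) => //; apply: (PD) => //; apply: (LP).
- move=> a b [e [he ->]] [e' [he' ->]].
  case: (eqVneq (pp e) (pp e')) => [E|ne]; first by constructor 1.
  case: (PN (e' - e)) => h.
    by constructor 2; split => //; exists e, e'.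
  constructor 3; split; first by rewrite eq_sym.
  by exists e', e; split => //; rewrite -opprB.
- move=> a b c [e [he Ec]] [ab [e1 [e1' [h1 h1' Ea Eb p1]]]]; subst a b c; split.
    by apply: contra ab => /eqP /canc_r ->.
  exists (e1 + e), (e1' + e); split; try exact: nn_add.
  + by rewrite pp_add.
  + by rewrite pp_add.
  + by rewrite opprD addrACA subrr addr0.
Qed.

Definition cb (P : Prop) : bool := if excluded_middle_informative P then true else false.
Lemma cbP (P : Prop) : reflect P (cb P).
Proof. by rewrite /cb; case: excluded_middle_informative => h; constructor. Qed.

Lemma filt_uniqF (K : eqType) (T : eqType) (V : nmodType) (s : seq (K * T))
   (F : K * T -> V) p :
  uniq (map fst s) -> p \in s -> \sum_(q <- s | q.1 == p.1) F q = F p.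
Proof.
elim: s => // q s IH /= /andP [qn us]; rewrite inE big_cons => /orP [/eqP -> | ps].
  rewrite eqxx big_seq_cond big1 ?addr0 // => q' /andP [q's /eqP e].
  by move: qn; rewrite -e map_f.
case: eqP => [e|_]; last exact: IH.
by move: qn; rewrite e map_f.
Qed.

Definition addd (G : nmodType) (x y : nat * G) : nat * G := ((x.1 + y.1)%N, x.2 + y.2).

Section Terms.
Variables (G : nmodType) (R : idomainType) (gr : grading G R).
Local Notation hom := (Defs.hom gr).
Local Notation pi := (pi gr).
Local Notation supp := (supp gr).

Definition cp (F : {poly R}) (d : nat * G) := pi d.2 F`_d.1.
Definition polyT (T : seq ((nat * G) * R)) : {poly R} :=
  \sum_(t <- T) t.2%:P * 'X^(t.1.1).
Definition homT (T : seq ((nat * G) * R)) := forall t, t \in T -> hom t.1.2 t.2.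

Lemma cpD F H d : cp (F + H) d = cp F d + cp H d.
Proof. by rewrite /cp coefD piD. Qed.
Lemma cpB F H d : cp (F - H) d = cp F d - cp H d.
Proof. by rewrite /cp coefB piB. Qed.

Lemma K2 T d : homT T -> cp (polyT T) d = \sum_(t <- T | t.1 == d) t.2.
Proof.
move=> hT; rewrite /cp /polyT coef_sum pi_sumr [RHS]big_mkcond /= big_seq [RHS]big_seq.
apply: eq_bigr => t tT; rewrite coefCM coefXn.
case: t tT => [[i g] x] tT /=; case: d => [k h] /=.
rewrite xpair_eqE; case: (eqVneq k i) => [e|ki] /=.
  by rewrite mulr1 (pi_hom_id _ (hT _ tT)).
by rewrite mulr0 pi0.
Qed.

Definition TL (F : {poly R}) : seq ((nat * G) * R) :=
  [seq ((i, g), pi g F`_i) | i <- iota 0 (size F), g <- supp F`_i].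

Lemma TL_mem F t : t \in TL F -> t.2 = cp F t.1.
Proof. by move/allpairsPdep => [i [g [_ _ ->]]]. Qed.

Lemma TL_hom F : homT (TL F).
Proof. by move=> t /allpairsPdep => [[i [g [_ _ ->]]]]; apply: pi_hom. Qed.

Lemma TL_uniq F : uniq (map fst (TL F)).
Proof.
rewrite /TL; elim: (iota 0 (size F)) (iota_uniq 0 (size F)) => //= i l IH /andP [il ul].
rewrite map_cat cat_uniq IH // andbT; apply/andP; split.
  rewrite -map_comp map_inj_uniq ?supp_uniq //.
  by move=> a b [].
apply/hasPn => x /mapP [t] /allpairsPdep [j [g [jl _ ->]]] -> /=.
apply/negP => /mapP [t'] /mapP [g' _ ->] /= [] ij _.
by rewrite -ij jl in il.
Qed.

Lemma TL_poly F : polyT (TL F) = F.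
Proof.
rewrite /polyT /TL big_allpairs_dep /=.
rewrite -[RHS]coefK poly_def -(big_mkord xpredT (fun i => F`_i *: 'X^i)).
rewrite /index_iota subn0; apply: eq_bigr => i _.
by rewrite -big_distrl /= -rmorph_sum -pi_sum mul_polyC.
Qed.

Lemma TL_cp F d : cp F d = \sum_(t <- TL F | t.1 == d) t.2.
Proof. by rewrite -{1}(TL_poly F) K2 //; apply: TL_hom. Qed.

Lemma cp_notin F d : d \notin map fst (TL F) -> cp F d = 0.
Proof.
move=> dn; rewrite TL_cp big_seq_cond big1 // => t /andP [tT /eqP td].
by move: dn; rewrite -td map_f.
Qed.

Lemma polyT_mul T1 T2 : polyT T1 * polyT T2 =
  polyT [seq (addd t1.1 t2.1, t1.2 * t2.2) | t1 <- T1, t2 <- T2].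
Proof.
rewrite /polyT big_allpairs_dep /= big_distrl /=; apply: eq_bigr => t1 _.
rewrite big_distrr /=; apply: eq_bigr => t2 _.
by rewrite polyCM exprD; ring.
Qed.

Lemma homT_mul T1 T2 : homT T1 -> homT T2 ->
  homT [seq (addd t1.1 t2.1, t1.2 * t2.2) | t1 <- T1, t2 <- T2].
Proof.
move=> h1 h2 t /allpairsPdep [t1 [t2 [t1T t2T ->]]] /=.
by apply: Defs.homM; [apply: h1 | apply: h2].
Qed.

Lemma cp_mul T1 T2 d : homT T1 -> homT T2 ->
  cp (polyT T1 * polyT T2) d =
  \sum_(t1 <- T1) \sum_(t2 <- T2 | addd t1.1 t2.1 == d) t1.2 * t2.2.
Proof.
move=> h1 h2; rewrite polyT_mul K2; last exact: homT_mul.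
rewrite big_mkcond big_allpairs_dep /=; apply: eq_bigr => t1 _.
by rewrite [RHS]big_mkcond.
Qed.

Lemma cp_mulJ (J : R -> Prop) F H : is_ideal J -> (forall d, J (cp F d)) ->
  forall d, J (cp (H * F) d).
Proof.
move=> hJ hF d; rewrite -(TL_poly H) -(TL_poly F) cp_mul; try exact: TL_hom.
apply: ideal_big => // t1 _; rewrite big_seq_cond; apply: ideal_big => // t2.
move=> /andP [t2T _]; rewrite (TL_mem t2T); apply: idealM => //.
Qed.

Lemma polyT_filter T (P : pred ((nat * G) * R)) :
  polyT [seq t <- T | P t] + polyT [seq t <- T | ~~ P t] = polyT T.
Proof. by rewrite /polyT !big_filter [RHS](bigID P). Qed.

Lemma polyT_shift T e (c : R) :
  polyT [seq (addd e t.1, c * t.2) | t <- T] = (c%:P * 'X^(e.1)) * polyT T.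
Proof.
rewrite /polyT big_map big_distrr /=; apply: eq_bigr => t _.
by rewrite polyCM exprD; ring.
Qed.


End Terms.

Section McCoy.
Variables (G : nmodType) (R : idomainType) (gr : grading G R).
Hypothesis Gc : cancellative G.
Variables (M : G -> Prop) (lt : G -> G -> Prop).
Hypotheses (MD : forall a b, M a -> M b -> M (a + b))
  (ltirr : forall a, ~ lt a a)
  (lttr : forall a b c, lt a b -> lt b c -> lt a c)
  (lttot : forall a b, M a -> M b -> [\/ a = b, lt a b | lt b a])
  (ltD : forall a b c, M c -> lt a b -> lt (a + c) (b + c)).
Local Notation hom := (Defs.hom gr).
Local Notation pi := (pi gr).

Definition ltd (x y : nat * G) := (x.1 < y.1)%N \/ (x.1 = y.1 /\ lt x.2 y.2).
Definition Md (x : nat * G) := M x.2.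

Lemma ltd_irr (x : nat * G) : ~ ltd x x.
Proof. by case => [|[_ h]]; [rewrite ltnn | exact: ltirr h]. Qed.

Lemma ltd_tr (x y z : nat * G) : ltd x y -> ltd y z -> ltd x z.
Proof.
case=> [h1|[e1 h1]] [h2|[e2 h2]].
- by left; exact: ltn_trans h1 h2.
- by left; rewrite -e2.
- by left; rewrite e1.
- by right; split; [rewrite e1 e2 | exact: lttr h1 h2].
Qed.

Lemma ltd_tot (x y : nat * G) : Md x -> Md y -> [\/ x = y, ltd x y | ltd y x].
Proof.
case: x y => [i a] [j b]; rewrite /Md /= => ha hb.
case: (ltngtP i j) => h.
- by constructor 2; left.
- by constructor 3; left.
- subst j; case: (lttot ha hb) => [->|h|h].
  + by constructor 1.
  + by constructor 2; right.
  + by constructor 3; right.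
Qed.

Lemma addd_C (x y : nat * G) : addd x y = addd y x.
Proof. by rewrite /addd addnC addrC. Qed.

Lemma ltd_D (x y z : nat * G) : Md z -> ltd x y -> ltd (addd x z) (addd y z).
Proof.
case: x y z => [i a] [j b] [k c]; rewrite /Md /= => hc.
case=> /= [h|[e h]]; first by left; rewrite ltn_add2r.
by right; split; [rewrite e | exact: ltD].
Qed.

Lemma ltd_Dl (x y z : nat * G) : Md z -> ltd x y -> ltd (addd z x) (addd z y).
Proof. by move=> hz h; rewrite ![addd z _]addd_C; apply: ltd_D. Qed.

Lemma addd_inj (e x y : nat * G) : addd e x = addd e y -> x = y.
Proof.
case: x y => [i a] [j b]; rewrite /addd /= => [[/eqP]].
by rewrite eqn_add2l => /eqP -> /Gc ->.
Qed.

Lemma ltd_max (l : seq (nat * G)) : (forall x, x \in l -> Md x) -> l != [::] ->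
  exists2 m, m \in l & forall x, x \in l -> x = m \/ ltd x m.
Proof.
elim: l => // x l IH hl _.
case: (eqVneq l [::]) => [->|ln].
  exists x; first exact: mem_head.
  by move=> y; rewrite inE => /eqP ->; left.
have [m ml hm] : exists2 m, m \in l & forall y, y \in l -> y = m \/ ltd y m.
  by apply: IH => // y yl; apply: hl; rewrite inE yl orbT.
have hx : Md x by apply: hl; exact: mem_head.
have hmm : Md m by apply: hl; rewrite inE ml orbT.
case: (ltd_tot hx hmm) => [e|h|h].
- exists m; first by rewrite inE ml orbT.
  by move=> y; rewrite inE => /orP [/eqP ->|/hm //]; left.
- exists m; first by rewrite inE ml orbT.
  by move=> y; rewrite inE => /orP [/eqP ->|/hm //]; right.
- exists x; first exact: mem_head.
  move=> y; rewrite inE => /orP [/eqP ->|/hm [->|h']]; first by left.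
    by right.
  by right; exact: ltd_tr h' h.
Qed.


Variables (p : {poly R}) (J : R -> Prop).
Hypotheses (hJ : is_ideal J) (p1 : Af gr p 1)
  (hpM : forall u, u \in TL gr p -> Md u.1).
Local Notation Tp := (TL gr p).

Lemma nJ_cb (x : R) : ~~ cb (~ J x) -> J x.
Proof. by move/negP => h; case: (classic (J x)) => // hn; exfalso; apply: h; apply/cbP. Qed.

Lemma mc_step n : forall T : seq ((nat * G) * R), (size T <= n)%N ->
  uniq (map fst T) -> homT gr T -> (forall t, t \in T -> Md t.1 /\ ~ J t.2) ->
  (forall d, J (cp gr (p * polyT T) d)) -> T = [::].
Proof.
elim: n => [|n IH] T; first by rewrite leqn0 => /nilP.
move=> hs uT hT hTM hJT.
case: (eqVneq T [::]) => // Tn; exfalso.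
pose E := [seq u <- Tp | cb (exists2 t, t \in T & ~ J (u.2 * t.2))].
have notE : forall u, u \in Tp -> u \notin E -> forall t, t \in T -> J (u.2 * t.2).
  move=> u uT' uE t tT; move: uE; rewrite mem_filter uT' andbT => /negP nE.
  by case: (classic (J (u.2 * t.2))) => // hn; exfalso; apply: nE; apply/cbP; exists t.
case: (eqVneq E [::]) => [E0|En].
  have [t0 t0T] : exists t0, t0 \in T.
    by move: Tn; case: (T) => // t T' _; exists t; rewrite mem_head.
  have : J (1 * t0.2).
    apply: (Af_sub (ideal_of_mul t0.2 hJ)) p1 => i g.
    rewrite -[pi g p`_i]/(cp gr p (i, g)).
    case: (boolP ((i, g) \in map fst Tp)) => [/mapP [u uT' ue] | nin].
      rewrite ue -(TL_mem uT'); apply: notE => //.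
      by move: E0; rewrite /E => ->.
    by rewrite (cp_notin nin) mul0r; apply: ideal0.
  rewrite mul1r => Jt0; by case: (hTM t0 t0T) => _ /(_ Jt0).
have EM : forall x, x \in map fst E -> Md x.
  by move=> x /mapP [u]; rewrite mem_filter => /andP [_ uT'] ->; apply: hpM.
have Ene : map fst E != [::] by move: En; case: (E).
have [e0 e0E he0] := ltd_max EM Ene.
have TM : forall x, x \in map fst T -> Md x.
  by move=> x /mapP [t tT ->]; case: (hTM t tT).
have Tne : map fst T != [::] by move: Tn; case: (T).
have [d0 d0T hd0] := ltd_max TM Tne.
have e0M := EM e0 e0E.
move: (e0E) => /mapP [u0]; rewrite mem_filter => /andP [/cbP [tw twT tJ] u0T] e0u.
move: (d0T) => /mapP [t0 t0T d0t].
have u0c : u0.2 = cp gr p e0 by rewrite e0u; exact: TL_mem.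
have Jmain : J (u0.2 * t0.2).
  have H := hJT (addd e0 d0).
  rewrite -{1}(TL_poly gr p) (cp_mul (addd e0 d0) (@TL_hom _ _ gr p) hT) in H.
  rewrite (bigID (fun u => u.1 == e0)) /= in H.
  have JB : J (\sum_(u <- Tp | u.1 != e0)
                 \sum_(t <- T | addd u.1 t.1 == addd e0 d0) u.2 * t.2).
    rewrite big_seq_cond; apply: ideal_big => // u /andP [uT' ne].
    rewrite big_seq_cond; apply: ideal_big => // t /andP [tT /eqP et].
    have uM := hpM uT'.
    have tM : Md t.1 by case: (hTM t tT).
    case: (ltd_tot e0M uM) => [e|h|h].
    - by rewrite e eqxx in ne.
    - apply: notE => //; apply/negP => uE.
      case: (he0 u.1 (map_f fst uE)) => [e|h'].
        by rewrite e eqxx in ne.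
      exact: ltd_irr (ltd_tr h h').
    - exfalso; have h1 := ltd_D tM h.
      case: (hd0 t.1 (map_f fst tT)) => [e|h2].
        by move: h1; rewrite et e; apply: ltd_irr.
      have h3 := ltd_Dl e0M h2.
      by move: (ltd_tr h1 h3); rewrite et; apply: ltd_irr.
  have := idealB hJ H JB; rewrite addrK.
  rewrite e0u (filt_uniqF (fun u => \sum_(t <- T | addd u.1 t.1 == addd u0.1 d0)
                                            u.2 * t.2)) ?TL_uniq //=.
  rewrite (eq_bigl (fun t => t.1 == t0.1)); last first.
    move=> t /=; rewrite d0t; apply/eqP/eqP => [/addd_inj //| ->] //.
  by rewrite (filt_uniqF (fun t => u0.2 * t.2)).
pose c := cp gr p e0.
have hc : hom e0.2 c by apply: pi_hom.
pose P := fun t : (nat * G) * R => cb (~ J (c * t.2)).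
pose T2 := [seq (addd e0 t.1, c * t.2) | t <- [seq t <- T | P t]].
pose T3 := [seq (addd e0 t.1, c * t.2) | t <- [seq t <- T | ~~ P t]].
have hT2 : homT gr T2.
  move=> t /mapP [t'] ; rewrite mem_filter => /andP [_ t'T] -> /=.
  by apply: Defs.homM => //; apply: hT.
have hT3 : homT gr T3.
  move=> t /mapP [t'] ; rewrite mem_filter => /andP [_ t'T] -> /=.
  by apply: Defs.homM => //; apply: hT.
have p23 : polyT T2 + polyT T3 = (c%:P * 'X^(e0.1)) * polyT T.
  by rewrite !polyT_shift -mulrDr polyT_filter.
have J3 : forall d, J (cp gr (polyT T3) d).
  move=> d; rewrite K2 // big_seq_cond; apply: ideal_big => // t /andP [].
  move=> /mapP [t']; rewrite mem_filter => /andP [nP _] -> _ /=.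
  exact: nJ_cb.
have hyp2 : forall d, J (cp gr (p * polyT T2) d).
  move=> d.
  have -> : p * polyT T2 = (c%:P * 'X^(e0.1)) * (p * polyT T) - p * polyT T3.
    by rewrite mulrCA -p23 mulrDr addrK.
  rewrite cpB; apply: idealB => //; apply: cp_mulJ => //.
have nPt0 : ~~ P t0.
  apply/negP => /cbP h; apply: h; rewrite /c -u0c; exact: Jmain.
have sizeT2 : (size T2 <= n)%N.
  rewrite size_map size_filter.
  have h1 := count_predC P T.
  have h2 : (0 < count (predC P) T)%N.
    by rewrite -has_count; apply/hasP; exists t0.
  have h3 : (count P T < size T)%N.
    by rewrite -h1 -[X in (X < _)%N]addn0 ltn_add2l.
  by rewrite -ltnS; exact: leq_trans h3 hs.
have uT2 : uniq (map fst T2).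
  have -> : map fst T2 = map (addd e0) (map fst [seq t <- T | P t]).
    by rewrite /T2 -!map_comp.
  rewrite map_inj_uniq; last exact: addd_inj.
  exact: subseq_uniq (map_subseq _ (filter_subseq _ _)) uT.
have hT2M : forall t, t \in T2 -> Md t.1 /\ ~ J t.2.
  move=> t /mapP [t']; rewrite mem_filter => /andP [/cbP nJ t'T] -> /=.
  split => //; apply: MD => //; by case: (hTM t' t'T).
have := IH T2 sizeT2 uT2 hT2 hT2M hyp2 => T20.
have : (addd e0 tw.1, c * tw.2) \in T2.
  apply: map_f; rewrite mem_filter twT andbT; apply/cbP; by rewrite /c -u0c.
by rewrite T20.
Qed.

Lemma mccoy (g : {poly R}) : (forall u, u \in TL gr g -> Md u.1) ->
  (forall d, J (cp gr (p * g) d)) -> forall d, J (cp gr g d).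
Proof.
move=> hgM hpg d.
pose P := fun t : (nat * G) * R => cb (~ J t.2).
pose T := [seq t <- TL gr g | P t].
pose T' := [seq t <- TL gr g | ~~ P t].
have hT' : forall d, J (cp gr (polyT T') d).
  move=> d'; rewrite K2; last by move=> t; rewrite mem_filter => /andP [_ /TL_hom].
  rewrite big_seq_cond; apply: ideal_big => // t /andP [].
  by rewrite mem_filter => /andP [nP _] _; apply: nJ_cb.
have T0 : T = [::].
  apply: (@mc_step (size T)) => //.
  - exact: subseq_uniq (map_subseq _ (filter_subseq _ _)) (TL_uniq gr g).
  - by move=> t; rewrite mem_filter => /andP [_ /TL_hom].
  - move=> t; rewrite mem_filter => /andP [/cbP nJ tT]; split => //.
    exact: hgM.
  - move=> d'; have -> : p * polyT T = p * g - p * polyT T'.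
      by rewrite -[in p * g](TL_poly gr g) -(polyT_filter (TL gr g) P) mulrDr addrK.
    by rewrite cpB; apply: idealB => //; apply: cp_mulJ.
rewrite TL_cp big_seq_cond; apply: ideal_big => // t /andP [tT _].
case: (classic (J t.2)) => // nJ; exfalso.
have : t \in T by rewrite mem_filter tT andbT; apply/cbP.
by rewrite T0.
Qed.

End McCoy.

Lemma ideal_of_mull (R : comRingType) (I : R -> Prop) y : is_ideal I ->
  is_ideal (fun x => I (y * x)).
Proof.
move=> hI; split; first by rewrite mulr0; apply: ideal0.
  by move=> a b ha hb; rewrite mulrDr; apply: idealD.
by move=> r x hx; rewrite mulrCA; apply: idealM.
Qed.

Section Fwd.
Variables (G : nmodType) (R : idomainType) (gr : grading G R).
Hypotheses (Gc : cancellative G) (Gt : quotient_torsion_free G).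
Hypothesis hP : graded_Prufer gr.
Local Notation hom := (Defs.hom gr).
Local Notation pi := (pi gr).
Local Notation supp := (supp gr).
Local Notation Af := (Af gr).
Local Notation tf := (@FracField.tofrac R).

Lemma fwd_key (f g : {poly R}) i γ j δ : Af (f * g) (pi γ f`_i * pi δ g`_j).
Proof.
set d := pi γ f`_i.
case: (eqVneq d 0) => [->|d0]; first by rewrite mul0r; apply: ideal0; apply: Af_ideal.
have hd : hom γ d by apply: pi_hom.
have Afd : Af f d by apply: Af_pi.
have hI : homogeneous_ideal gr (Af f).
  split; first exact: Af_ideal.
  by move=> a x Ha /comp_iff [_ [h ->]]; apply: Af_hom.
have fgI : fin_gen (Af f).
  exists [seq t.2 | t <- TL gr f]; move=> x; split.
  - apply: Af_sub; first exact: span_ideal.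
    move=> i' g'; rewrite -[pi g' f`_i']/(cp gr f (i', g')).
    case: (boolP ((i', g') \in map fst (TL gr f))) => [/mapP [u uT ue] | nin].
      by rewrite ue -(TL_mem uT); apply: span_in; apply: map_f.
    by rewrite (cp_notin nin); apply: ideal0; apply: span_ideal.
  - apply: span_sub; first exact: Af_ideal.
    by move=> y /mapP [t tT ->]; rewrite (TL_mem tT); apply: Af_pi.
have [Jf [J0 JD JM _ Jiff]] := hP hI fgI (ex_intro _ d (conj Afd d0)).
pose dR := fun y => exists r, y = d * r.
have dR_ideal : is_ideal dR.
  split.
  - by exists 0; rewrite mulr0.
  - by move=> x y [r ->] [r' ->]; exists (r + r'); rewrite mulrDr.
  - by move=> r x [r' ->]; exists (r * r'); rewrite mulrCA.
pose V := fun v => forall x, Af f x -> dR (x * v).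
pose D := fun y => exists l : seq ((nat * G) * R),
  (forall k, k \in l -> V k.2) /\ y = \sum_(k <- l) cp gr f k.1 * k.2.
have D_ideal : is_ideal D.
  split.
  - by exists [::]; rewrite big_nil.
  - move=> x y [l1 [h1 ->]] [l2 [h2 ->]]; exists (l1 ++ l2); split; last by rewrite big_cat.
    by move=> k; rewrite mem_cat => /orP [] ?; [apply: h1 | apply: h2].
  - move=> r x [l1 [h1 ->]]; exists [seq (k.1, r * k.2) | k <- l1]; split.
      move=> k /mapP [k' k'l ->] x' Ax' /=.
      have [r' e] := h1 k' k'l x' Ax'.
      by exists (r * r'); rewrite mulrCA e mulrCA.
    by rewrite big_map mulr_sumr; apply: eq_bigr => k _; rewrite mulrCA.
have DM : forall x v, Af f x -> V v -> D (x * v).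
  move=> x v Ax Vv; move: x Ax; apply: (Af_sub (ideal_of_mul v D_ideal)) => i' g'.
  exists [:: ((i', g'), v)]; split; last by rewrite big_seq1.
  by move=> k; rewrite inE => /eqP ->.
have VJ : forall w, Jf w -> exists v, tf d * w = tf v /\ V v.
  move=> w Jw.
  have [v ev] : exists v, tf d * w = tf v.
    apply/(Jiff _); exists [:: (d, w)]; split; last by rewrite big_seq1.
    by move=> q; rewrite inE => /eqP ->.
  exists v; split => // x Ax.
  have [r er] : exists r, tf x * w = tf r.
    apply/(Jiff _); exists [:: (x, w)]; split; last by rewrite big_seq1.
    by move=> q; rewrite inE => /eqP ->.
  exists r; apply: tofrac_inj; rewrite !tofracM -ev -er.
  by rewrite mulrCA.
have Dd : D d.
  have [s [hs e1]] : exists s : seq (R * {fraction R}),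
      (forall p, p \in s -> Af f p.1 /\ Jf p.2) /\ 1 = \sum_(p <- s) tf p.1 * p.2.
    by apply/(Jiff 1); exists 1; rewrite tofrac1.
  have gen : forall s', (forall q, q \in s' -> Af f q.1 /\ Jf q.2) ->
      exists y, tf y = tf d * \sum_(q <- s') tf q.1 * q.2 /\ D y.
    elim=> [|q s' IH] hs'.
      exists 0; split; first by rewrite big_nil mulr0 tofrac0.
      by exists [::]; split => //; rewrite big_nil.
    have [Aq Jq] := hs' q (mem_head _ _).
    have [v [ev Vv]] := VJ _ Jq.
    have [y [ey Dy]] : exists y, tf y = tf d * \sum_(q <- s') tf q.1 * q.2 /\ D y.
      by apply: IH => q' h; apply: hs'; rewrite inE h orbT.
    exists (q.1 * v + y); split.
      by rewrite tofracD tofracM ey -ev big_cons mulrDr mulrCA.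
    by apply: (idealD D_ideal) => //; apply: DM.
  have [y [ey Dy]] := gen s hs.
  by move: ey; rewrite -e1 mulr1 => /tofrac_inj <-.
have [l [hl el]] := Dd.
pose N := size f.
pose l' := [seq k <- l | k.1 \in map fst (TL gr f)].
have el' : d = \sum_(k <- l') cp gr f k.1 * k.2.
  rewrite el big_filter [LHS](bigID (fun k => k.1 \in map fst (TL gr f))) /=.
  rewrite [X in _ + X]big1 ?addr0 // => k nk.
  by rewrite (cp_notin nk) mul0r.
have hl' : forall k, k \in l' -> V k.2 /\ (k.1.1 < N)%N.
  move=> k; rewrite mem_filter => /andP [/mapP [u uT ->] kl]; split; first exact: hl.
  move: uT => /allpairsPdep [i' [g' [hi _ ->]]] /=.
  by move: hi; rewrite mem_iota.
pose TH := [seq ((N - k.1.1)%N, b, pi b k.2) | k <- l',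
                b <- [seq b <- supp k.2 | k.1.2 + b == γ]].
pose H := polyT TH.
have hTH : homT gr TH.
  by move=> t /allpairsPdep [k [b [_ _ ->]]]; apply: pi_hom.
have LV : forall x v b, Af f x -> V v -> dR (x * pi b v).
  move=> x v b Ax Vv; move: x Ax.
  apply: (Af_sub (ideal_of_mul (pi b v) dR_ideal)) => i' g'.
  rewrite -(pi_shift Gc b v (pi_hom gr g' f`_i')).
  have [r er] := Vv _ (Af_pi gr f i' g').
  by rewrite er; apply: pi_mulh_mem hd.
have A : forall m, dR ((f * H)`_m).
  move=> m; rewrite coefM; apply: ideal_big => // i' _.
  rewrite /H /polyT coef_sum mulr_sumr big_seq; apply: ideal_big => // t tT.
  rewrite coefCM coefXn mulrA; apply: idealMr => //.
  move: tT => /allpairsPdep [k [b [kl _ ->]]] /=.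
  by apply: LV; [exact: Af_coef | case: (hl' k kl)].
pose q := fun m => proj1_sig (constructive_indefinite_description _ (A m)).
have hq : forall m, (f * H)`_m = d * q m.
  by move=> m; exact: (proj2_sig (constructive_indefinite_description _ (A m))).
pose Pp := \poly_(m < size (f * H)) q m.
have ePp : f * H = d%:P * Pp.
  apply/polyP => m; rewrite coefCM coef_poly; case: ltnP => hm; first exact: hq.
  by rewrite nth_default // mulr0.
have E1 : cp gr (f * H) (N, γ) = d.
  rewrite -{1}(TL_poly gr f) (cp_mul (N, γ) (@TL_hom _ _ gr f) hTH).
  transitivity (\sum_(u <- TL gr f) \sum_(k <- l')
      \sum_(b <- supp k.2 | k.1.2 + b == γ)
      (if addd u.1 ((N - k.1.1)%N, b) == (N, γ) then u.2 * pi b k.2 else 0)).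
    apply: eq_bigr => u _; rewrite big_mkcond big_allpairs_dep /=.
    by apply: eq_bigr => k _; rewrite big_filter.
  transitivity (pi γ d); last by rewrite (pi_hom_id _ hd) eqxx.
  rewrite [X in pi γ X]el' pi_sumr exchange_big big_seq [RHS]big_seq.
  apply: eq_bigr => k kl.
  have [_ kN] := hl' k kl.
  rewrite (pi_mulh γ k.2 (pi_hom gr k.1.2 f`_k.1.1)).
  rewrite exchange_big /=; apply: eq_bigr => b /eqP hb.
  rewrite -[pi k.1.2 f`_k.1.1]/(cp gr f k.1) (TL_cp gr f k.1) big_distrl /=.
  rewrite [RHS]big_mkcond /= big_seq [RHS]big_seq; apply: eq_bigr => u uT.
  have uN : (u.1.1 < N)%N.
    by move: uT => /allpairsPdep [i' [g' [hi _ ->]]] /=; move: hi; rewrite mem_iota.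
  congr (if _ then _ else _).
  move: uN kN hb; case: u uT => [[i1 g1] x] _; case: k kl => [[i2 g2] y] _ /= uN kN hb.
  rewrite /addd /= !xpair_eqE; congr andb.
    by apply/eqP/eqP; lia.
  rewrite -hb; apply/eqP/eqP => [h|->] //.
  by apply: (Gc (a := b)); rewrite addrC h addrC.
have E2 : pi 0 Pp`_N = 1.
  apply: (mulfI d0); rewrite mulr1 -[RHS]E1 ePp /cp /= coefCM.
  by rewrite -(pi_shift Gc _ _ hd) addr0.
have p1 : Af Pp 1 by rewrite -E2; apply: Af_pi.
have [M [lt [[M0 MD MS ltirr] [lttr lttot ltD]]]] :=
  order_exists Gc Gt [seq t.1.2 | t <- TL gr Pp ++ TL gr g].
have hMp : forall u, u \in TL gr Pp -> Md M u.1.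
  by move=> u uT; apply: MS; apply/map_f; rewrite mem_cat uT.
have hMg : forall u, u \in TL gr g -> Md M u.1.
  by move=> u uT; apply: MS; apply/map_f; rewrite mem_cat uT orbT.
have Cg : Af (Pp * g) (pi δ g`_j).
  exact: (mccoy Gc MD ltirr lttr lttot ltD (Af_ideal gr (Pp * g)) p1 hMp hMg
           (fun d' => Af_pi gr (Pp * g) d'.1 d'.2) (j, δ)).
have Dg : Af (d%:P * (Pp * g)) (d * pi δ g`_j).
  move: Cg; apply: (Af_sub (ideal_of_mull d (Af_ideal gr _))) => i' g'.
  by rewrite -(pi_shift Gc _ _ hd) -coefCM; apply: Af_pi.
move: Dg; rewrite mulrA -ePp.
have -> : f * H * g = H * (f * g) by ring.
move/Af_mul_sub; apply: prod_sub; first exact: Af_ideal.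
by move=> x y _ Ay; apply: idealM => //; apply: Af_ideal.
Qed.

Lemma fwd (f g : {poly R}) : ideal_eq (ideal_prod (Af f) (Af g)) (Af (f * g)).
Proof.
move=> x; split; last exact: Af_mul_sub.
apply: prod_sub; first exact: Af_ideal.
move=> a b Aa Ab; move: a Aa.
apply: (Af_sub (ideal_of_mul b (Af_ideal gr _))) => i γ.
move: b Ab; apply: (Af_sub (ideal_of_mull _ (Af_ideal gr _))) => j δ.
exact: fwd_key.
Qed.

End Fwd.

Unset Implicit Arguments.

Theorem theorem3p1 (G : nmodType) (R : idomainType) (gr : grading G R)
    (Gcanc : cancellative G) (Gtf : quotient_torsion_free G) :
  graded_Prufer gr <->
  (forall f g : {poly R}, ideal_eq (ideal_prod (Af gr f) (Af gr g)) (Af gr (f * g))).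
Proof.
split.
  by move=> hP f g; exact: (fwd Gcanc Gtf hP f g).
exact: back_main.
Qed.
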